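(* Let $I\lhd K[x_1,\ldots,x_n]$, let $\pi:\mathbb{R}^n\to\mathbb{R}^{m+1}$ be a rational projection, $l=n-m-1$, and fix $v^{(1)},\ldots,v^{(l)}\in\mathbb{Z}^n$ spanning $\ker\pi$. Let $f_1,\ldots,f_{n-m}\in K[x_1,\ldots,x_n]$, $Y=\bigcap_{i=1}^{n-m}\mathcal{T}(f_i)\subseteq\mathbb{R}^n$ and $\tilde Y=\bigcap_{i=1}^{n-m}\mathcal{T}(\tilde f_i)\subseteq\mathbb{R}^{n+l}$. Then: (a) if the intersection $Y$ is proper, then $\tilde Y$ is proper; (b) if the intersection $Y$ is transversal, then $\tilde Y$ is transversal; (c) if $f_1,\ldots,f_{n-m}$ are Newton-nondegenerate, then $\tilde f_1,\ldots,\tilde f_{n-m}$ are Newton-nondegenerate; (d) if the intersection $Y$ is complete, then $\tilde Y$ is complete.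
   Context: $K$ is a field with a real valuation $\mathrm{val}:K\to\mathbb{R}\cup\{\infty\}$, extended to an algebraic closure $\bar K$. For a (Laurent) polynomial $f=\sum_\alpha c_\alpha x^\alpha$ over $K$ in $N$ variables, its tropical hypersurface is $\mathcal{T}(f)=\{w\in\mathbb{R}^N:\ \min_\alpha(\mathrm{val}(c_\alpha)+\alpha\cdot w)\text{ is attained at least twice}\}$; for an ideal $I$, $\mathcal{T}(I)=\bigcap_{f\in I}\mathcal{T}(f)$. $\mathrm{New}(f)$ is the convex hull of the support of $f$; $\mathcal{T}(f)$ is dual to the regular subdivision of $\mathrm{New}(f)$ induced by lifting each exponent $\alpha$ to height $\mathrm{val}(c_\alpha)$ and projecting the lower faces; a cell $C$ of $\mathcal{T}(f)$ has a dual cell $C^\vee$ in this subdivision. A rational projection $\pi:\mathbb{R}^n\to\mathbb{R}^{m+1}$ is $x\mapsto Ax$ with a rational $(m+1)\times n$ matrix $A$ of rank $m+1$. For $f\in K[x_1,\ldots,x_n]$, $\tilde f:=f\big(x_1\prod_{j=1}^l\lambda_j^{v^{(j)}_1},\ldots,x_n\prod_{j=1}^l\lambda_j^{v^{(j)}_n}\big)\in K[x_1,\ldots,x_n,\lambda_1^{\pm1},\ldots,\lambda_l^{\pm1}]$, whose tropical hypersurface lives in $\mathbb{R}^{n+l}$. For $f_1,\ldots,f_k$ in $N$ variables let $Y_i=\mathcal{T}(f_i)$, $Y=Y_1\cap\cdots\cap Y_k$, $U=Y_1\cup\cdots\cup Y_k=\mathcal{T}(f_1\cdots f_k)$. The intersection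 is proper if $\dim Y=N-k$. For a nonempty cell $C$ of a proper intersection, write $C=\bigcap_i C_i$ with $C_i$ the minimal cell of $Y_i$ containing $C$; the dual cell of $C$ as a cell of $U$ is $C^\vee=C_1^\vee+\cdots+C_k^\vee$, and $Y$ is transversal along $C$ if $\dim C^\vee=\sum_i\dim C_i^\vee$. $Y$ is transversal if for every $J\subseteq\{1,\ldots,k\}$ with $|J|\ge2$ the intersection $\bigcap_{j\in J}Y_j$ is proper and transversal along each of its cells. A proper intersection is complete if $\mathcal{T}(\langle f_1,\ldots,f_k\rangle)=\bigcap_i\mathcal{T}(f_i)$. The polynomials $f_1,\ldots,f_k$ are Newton-nondegenerate if for every choice of faces $A_i\subseteq\mathrm{New}(f_i)$ such that $A_1+\cdots+A_k$ is a face of $\mathrm{New}(f_1)+\cdots+\mathrm{New}(f_k)$ of dimension at most $k-1$, the restrictions $f_i|_{A_i}$ (sum of terms of $f_i$ with exponents in $A_i$) have no common zero in $(\bar K^* )^N$. *)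

(* Defs.v *)
From HB Require Import structures.
From mathcomp Require Import all_boot all_order all_algebra.
Set Implicit Arguments. Unset Strict Implicit. Unset Printing Implicit Defensive.
Import Order.TTheory GRing.Theory Num.Theory.
Local Open Scope ring_scope.

(* A Laurent polynomial over K in N variables is represented by a finite list
   of terms (exponent, coefficient); repeated exponents are summed. *)
Definition laurent (K : Type) (N : nat) := seq ('rV[int]_N * K).

Section Laurent.
Variables (K : fieldType) (N : nat).
Implicit Types (p q : laurent K N) (a : 'rV[int]_N).

Definition lcoef p a : K := \sum_(t <- p | t.1 == a) t.2.
Definition lsupp p : seq 'rV[int]_N :=
  undup [seq t.1 | t <- p & lcoef p t.1 != 0].
Definition ladd p q : laurent K N := p ++ q.
Definition lmul p q : laurent K N := [seq (s.1 + t.1, s.2 * t.2) | s <- p, t <- q].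
Definition is_poly p : Prop := forall a, a \in lsupp p -> forall j, 0 <= a 0 j.
Definition lrestrict p (A : seq 'rV[int]_N) : laurent K N :=
  [seq t <- p | t.1 \in A].
Definition leval (L : fieldType) (iota : {rmorphism K -> L}) p (z : 'I_N -> L) : L :=
  \sum_(t <- p) iota t.2 * \prod_(j < N) (z j) ^ (t.1 0 j).
End Laurent.

Section Tropical.
Variables (R : realFieldType) (K : fieldType) (val : K -> R) (N : nat).
Implicit Types (p : laurent K N) (w : 'rV[R]_N).

Definition pairing (a : 'rV[int]_N) w : R := \sum_(j < N) (a 0 j)%:~R * w 0 j.
Definition tropterm p w a : R := val (lcoef p a) + pairing a w.
Definition argmin p w : seq 'rV[int]_N :=
  [seq a <- lsupp p | all (fun b => tropterm p w a <= tropterm p w b) (lsupp p)].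
(* w in T(p): the minimum is attained at least twice (T(0) = R^N) *)
Definition in_trop p w : Prop := lsupp p = [::] \/ (1 < size (argmin p w))%N.
Definition in_ideal k (f : 'I_k -> laurent K N) (g : laurent K N) : Prop :=
  exists h : 'I_k -> laurent K N,
    forall a, lcoef g a = lcoef (\big[@ladd K N/[::]]_(i < k) lmul (h i) (f i)) a.
Definition in_trop_ideal k (f : 'I_k -> laurent K N) w : Prop :=
  forall g, in_ideal f g -> in_trop g w.
(* the face of New(p) on which the linear functional w is minimal
   (its lattice points in the support) *)
Definition face p w : seq 'rV[int]_N :=
  [seq a <- lsupp p | all (fun b => pairing a w <= pairing b w) (lsupp p)].
End Tropical.

Section Dim.
Variables (R : realFieldType) (N : nat).
Definition dim_ge (S : 'rV[R]_N -> Prop) (d : nat) : Prop :=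
  exists p : 'I_d.+1 -> 'rV[R]_N,
    \rank (\matrix_(i < d) (p (lift ord0 i) - p ord0)) = d /\
    forall t : 'I_d.+1 -> R, (forall i, 0 <= t i) -> \sum_i t i = 1 ->
      S (\sum_i t i *: p i).
(* dim S = d (for the polyhedral sets considered here) *)
Definition has_dim (S : 'rV[R]_N -> Prop) (d : nat) : Prop :=
  dim_ge S d /\ forall e, dim_ge S e -> (e <= d)%N.
End Dim.

Section LatDim.
Variable N : nat.
(* dimension of the convex hull of a finite nonempty set of lattice points *)
Definition affdim (S : seq 'rV[int]_N) : nat :=
  \rank (\matrix_(i < size S) map_mx (fun x : int => x%:~R : rat)
                                  (nth 0 S i - head 0 S)).
Definition minkowski (S T : seq 'rV[int]_N) : seq 'rV[int]_N :=
  [seq s + t | s <- S, t <- T].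
Definition msum (Ss : seq (seq 'rV[int]_N)) : seq 'rV[int]_N :=
  foldr minkowski [:: 0] Ss.
End LatDim.

Section Intersections.
Variables (R : realFieldType) (K : fieldType) (val : K -> R) (N k : nat).
Variable f : 'I_k -> laurent K N.

Definition Yint (J : {set 'I_k}) (w : 'rV[R]_N) : Prop :=
  forall j, j \in J -> in_trop val (f j) w.
Definition Y := Yint setT.

Definition proper_int (J : {set 'I_k}) : Prop := has_dim (Yint J) (N - #|J|).
Definition proper_inter : Prop := proper_int setT.

(* For w in Y_J, the cell C of Y_J containing w in its relative interior is
   C = \bigcap C_j with C_j the cell of T(f_j) containing w in its relative
   interior; its dual C_j^v is the convex hull of the exponents where the
   minimum defining T(f_j) is attained at w. *)
Definition transversal_at (J : {set 'I_k}) (w : 'rV[R]_N) : Prop :=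
  affdim (msum [seq argmin val (f j) w | j <- enum J])
  = (\sum_(j in J) affdim (argmin val (f j) w))%N.

Definition transversal_inter : Prop :=
  forall J : {set 'I_k}, (2 <= #|J|)%N ->
    proper_int J /\ forall w, Yint J w -> transversal_at J w.

Definition complete_inter : Prop :=
  proper_inter /\ forall w, in_trop_ideal val f w <-> Y w.

(* Choices of faces A_i of New(f_i) whose sum is a face of the Minkowski sum
   are exactly A_i = face of New(f_i) minimizing a common functional w. *)
Definition newton_nondeg (L : closedFieldType) (iota : {rmorphism K -> L}) : Prop :=
  forall w : 'rV[R]_N,
    (affdim (msum [seq face (f i) w | i <- enum 'I_k]) <= k.-1)%N ->
    ~ exists z : 'I_N -> L, (forall j, z j != 0) /\
        forall i, leval iota (lrestrict (f i) (face (f i) w)) z = 0.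
End Intersections.

(* x_i -> x_i * prod_j lambda_j^{v^(j)_i}: the monomial x^a becomes
   x^a * prod_j lambda_j^{a . v^(j)}; the rows of V are v^(1),...,v^(l). *)
Definition tilde_exp (n l : nat) (V : 'M[int]_(l, n)) (a : 'rV[int]_n)
  : 'rV[int]_(n + l) := row_mx a (a *m V^T).
Definition tilde (K : fieldType) (n l : nat) (V : 'M[int]_(l, n)) (p : laurent K n)
  : laurent K (n + l) := [seq (tilde_exp V t.1, t.2) | t <- p].

(* real valuation on K (val 0 = infinity is never used: only nonzero
   coefficients are valued) *)
Definition is_valuation (R : realFieldType) (K : fieldType) (val : K -> R) : Prop :=
  (forall a b : K, a != 0 -> b != 0 -> val (a * b) = val a + val b) /\
  (forall a b : K, a != 0 -> b != 0 -> a + b != 0 ->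
     Num.min (val a) (val b) <= val (a + b)).

(* Main.v *)
Require Import Defs.
From HB Require Import structures.
From mathcomp Require Import all_boot all_order all_algebra zify.
Set Implicit Arguments. Unset Strict Implicit. Unset Printing Implicit Defensive.
Import Order.TTheory GRing.Theory Num.Theory.
Local Open Scope ring_scope.

Section LaurentLemmas.
Variables (K : fieldType) (N : nat).
Implicit Types (p q : laurent K N) (a : 'rV[int]_N).

Lemma lcoef_cat p q a : lcoef (ladd p q) a = lcoef p a + lcoef q a.
Proof. by rewrite /lcoef /ladd big_cat. Qed.

Lemma lcoef_nil a : lcoef ([::] : laurent K N) a = 0.
Proof. by rewrite /lcoef big_nil. Qed.

Lemma lcoef_big k (F : 'I_k -> laurent K N) a :
  lcoef (\big[@ladd K N/[::]]_(i < k) F i) a = \sum_(i < k) lcoef (F i) a.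
Proof.
exact: (big_morph (fun p => lcoef p a) (fun p q => lcoef_cat p q a) (lcoef_nil a)).
Qed.

Lemma mem_lsupp p a : (a \in lsupp p) = (lcoef p a != 0).
Proof.
rewrite /lsupp mem_undup; apply/mapP/idP.
  by case=> t; rewrite mem_filter => /andP[H _] ->.
move=> H; case: (boolP (has (fun t => t.1 == a) p)) => [/hasP[t tp /eqP ta]|].
  by exists t => //; rewrite mem_filter ta H.
move=> hn; move: H; rewrite /lcoef big_hasC ?eqxx //.
Qed.

Lemma lsupp_uniq p : uniq (lsupp p).
Proof. exact: undup_uniq. Qed.

Lemma lmul_nil q : lmul ([::] : laurent K N) q = [::].
Proof. by []. Qed.

Lemma lmul_one q : lmul [:: (0, 1)] q = q.
Proof.
rewrite /lmul /= cats0; rewrite -[RHS]map_id; apply: eq_map => -[x y] /=.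
by rewrite add0r mul1r.
Qed.
End LaurentLemmas.
Section TildeLemmas.
Variables (K : fieldType) (n l : nat) (V : 'M[int]_(l, n)).
Local Notation F := (tilde_exp V).

Lemma tilde_exp_inj : injective F.
Proof. by move=> a b /eq_row_mx[]. Qed.

Lemma tilde_expD a b : F (a + b) = F a + F b.
Proof. by rewrite /tilde_exp mulmxDl add_row_mx. Qed.

Lemma tilde_expB a b : F (a - b) = F a - F b.
Proof. by rewrite /tilde_exp mulmxBl opp_row_mx add_row_mx. Qed.

Lemma tilde_exp0 : F 0 = 0.
Proof. by rewrite /tilde_exp mul0mx row_mx0. Qed.

Lemma lcoef_tilde (p : laurent K n) a : lcoef (tilde V p) (F a) = lcoef p a.
Proof.
rewrite /lcoef /tilde big_map; apply: eq_bigl => t /=.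
by rewrite (inj_eq tilde_exp_inj).
Qed.

Lemma lsupp_tilde (p : laurent K n) : lsupp (tilde V p) = map F (lsupp p).
Proof.
rewrite /lsupp -(undup_map_inj tilde_exp_inj); congr undup.
have -> : [seq t <- tilde V p | lcoef (tilde V p) t.1 != 0] =
          tilde V [seq t <- p | lcoef p t.1 != 0].
  rewrite {1}/tilde filter_map; congr map; apply: eq_filter => t /=.
  by rewrite lcoef_tilde.
by rewrite /tilde -!map_comp.
Qed.
End TildeLemmas.
Section TropLemmas.
Variables (R : realFieldType) (K : fieldType) (val : K -> R).
Variables (n l : nat) (V : 'M[int]_(l, n)).
Local Notation F := (tilde_exp V).
Definition VR : 'M[R]_(l, n) := map_mx (fun x : int => x%:~R) V.
Definition Pmat : 'M[R]_(n + l, n) := col_mx 1%:M VR.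
Definition Pw (w : 'rV[R]_(n + l)) : 'rV[R]_n := w *m Pmat.

Lemma pairing_row (a : 'rV[int]_n) (b : 'rV[int]_l) (x : 'rV[R]_n) (y : 'rV[R]_l) :
  pairing (row_mx a b) (row_mx x y) = pairing a x + pairing b y.
Proof.
by rewrite /pairing big_split_ord /=; congr (_ + _); apply: eq_bigr => i _;
  rewrite ?row_mxEl ?row_mxEr.
Qed.

Lemma pairingDl N (a b : 'rV[int]_N) (w : 'rV[R]_N) : pairing (a + b) w = pairing a w + pairing b w.
Proof. by rewrite /pairing -big_split; apply: eq_bigr => i _; rewrite mxE intrD mulrDl. Qed.

Lemma pairingDr N (a : 'rV[int]_N) (w v : 'rV[R]_N) : pairing a (w + v) = pairing a w + pairing a v.
Proof. by rewrite /pairing -big_split; apply: eq_bigr => i _; rewrite mxE mulrDr. Qed.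

Lemma pairing_mulV (a : 'rV[int]_n) (y : 'rV[R]_l) :
  pairing (a *m V^T) y = pairing a (y *m VR).
Proof.
rewrite /pairing.
under eq_bigr => k _ do rewrite !mxE rmorph_sum /= mulr_suml.
rewrite exchange_big /=; apply: eq_bigr => j _.
rewrite !mxE mulr_sumr; apply: eq_bigr => k _.
by rewrite intrM !mxE -mulrA [y 0 k * _]mulrC.
Qed.

Lemma Pw_row (x : 'rV[R]_n) (y : 'rV[R]_l) : Pw (row_mx x y) = x + y *m VR.
Proof. by rewrite /Pw /Pmat mul_row_col mulmx1. Qed.

Lemma pairing_tilde (a : 'rV[int]_n) (w : 'rV[R]_(n + l)) : pairing (F a) w = pairing a (Pw w).
Proof.
rewrite -[w]hsubmxK /tilde_exp pairing_row pairing_mulV Pw_row.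
by rewrite pairingDr.
Qed.
End TropLemmas.
Section TropLemmas2.
Variables (R : realFieldType) (K : fieldType) (val : K -> R).
Variables (n l : nat) (V : 'M[int]_(l, n)).
Local Notation F := (tilde_exp V).
Implicit Types (p : laurent K n) (w : 'rV[R]_(n + l)).

Lemma tropterm_tilde p w a :
  tropterm val (tilde V p) w (F a) = tropterm val p (Pw V w) a.
Proof. by rewrite /tropterm lcoef_tilde pairing_tilde. Qed.

Lemma argmin_tilde p w : argmin val (tilde V p) w = map F (argmin val p (Pw V w)).
Proof.
rewrite /argmin lsupp_tilde filter_map; congr map; apply: eq_filter => a /=.
by rewrite all_map; apply: eq_all => b /=; rewrite !tropterm_tilde.
Qed.

Lemma face_tilde p w : face (tilde V p) w = map F (face p (Pw V w)).
Proof.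
rewrite /face lsupp_tilde filter_map; congr map; apply: eq_filter => a /=.
by rewrite all_map; apply: eq_all => b /=; rewrite !pairing_tilde.
Qed.

Lemma in_trop_tilde p w : in_trop val (tilde V p) w <-> in_trop val p (Pw V w).
Proof.
rewrite /in_trop argmin_tilde size_map lsupp_tilde.
by split; case=> [H|H]; [left; move: H; case: (lsupp p) | right | left; rewrite H | right].
Qed.

Lemma lrestrict_tilde p (S : seq 'rV[int]_n) :
  lrestrict (tilde V p) (map F S) = tilde V (lrestrict p S).
Proof.
rewrite /lrestrict /tilde filter_map; congr map; apply: eq_filter => t /=.
by rewrite mem_map //; exact: tilde_exp_inj.
Qed.
End TropLemmas2.
Section AffLemmas.
Variables (n l : nat) (V : 'M[int]_(l, n)).
Local Notation F := (tilde_exp V).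
Local Notation ir := (fun x : int => x%:~R : rat).

Lemma rank_mx_size N k1 k2 (e : k1 = k2) (E : nat -> 'rV[rat]_N) :
  \rank (\matrix_(i < k1) E i) = \rank (\matrix_(i < k2) E i).
Proof. by case: _ / e. Qed.

Lemma rank_tilde k (E : nat -> 'rV[int]_n) :
  \rank (\matrix_(i < k) map_mx ir (F (E i))) = \rank (\matrix_(i < k) map_mx ir (E i)).
Proof.
set M := \matrix_(i < k) map_mx ir (E i).
have -> : \matrix_(i < k) map_mx ir (F (E i)) = M *m row_mx 1%:M (map_mx ir V)^T.
  rewrite mul_mx_row mulmx1; apply/row_matrixP => i.
  rewrite rowK row_row_mx row_mul !rowK /tilde_exp map_row_mx map_mxM map_trmx.
  by [].
apply/eqP; rewrite eqn_leq mxrankM_maxl /=.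
have {1}-> : M = (M *m row_mx 1%:M (map_mx ir V)^T) *m col_mx 1%:M 0.
  by rewrite -mulmxA mul_row_col mulmx0 addr0 !mulmx1.
exact: mxrankM_maxl.
Qed.

Lemma affdim_tilde (s : seq 'rV[int]_n) : affdim (map F s) = affdim s.
Proof.
rewrite /affdim.
rewrite (@rank_mx_size _ _ _ (size_map F s)
  (fun i => map_mx ir (nth 0 (map F s) i - head 0 (map F s)))).
have E : forall i, nth 0 (map F s) i - head 0 (map F s) = F (nth 0 s i - head 0 s).
  move=> i; rewrite tilde_expB; congr (_ - _).
    case: (ltnP i (size s)) => H; first by rewrite (nth_map 0).
    by rewrite !nth_default ?size_map // tilde_exp0.
  by case: s => [|x s] /=; rewrite ?tilde_exp0.
rewrite -(rank_tilde (size s) (fun i => nth 0 s i - head 0 s)).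
by congr mxrank; apply/row_matrixP => i; rewrite !rowK E.
Qed.

Lemma minkowski_tilde (S T : seq 'rV[int]_n) :
  minkowski (map F S) (map F T) = map F (minkowski S T).
Proof.
elim: S => [|x S IH] //=; rewrite /minkowski /= in IH *.
rewrite IH map_cat -!map_comp; congr (_ ++ _); apply: eq_map => y /=.
by rewrite tilde_expD.
Qed.

Lemma msum_tilde (ss : seq (seq 'rV[int]_n)) :
  msum (map (map F) ss) = map F (msum ss).
Proof.
elim: ss => [|s ss IH] /=; first by rewrite tilde_exp0.
by rewrite IH minkowski_tilde.
Qed.
End AffLemmas.
Section EvalLemmas.
Variables (K : fieldType) (L : fieldType) (iota : {rmorphism K -> L}).
Variables (n l : nat) (V : 'M[int]_(l, n)).
Local Notation F := (tilde_exp V).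

Definition zfun (z : 'I_(n + l) -> L) : 'I_n -> L :=
  fun j => z (lshift l j) * \prod_(k < l) z (rshift n k) ^ (V k j).

Lemma zfun_neq0 z : (forall j, z j != 0) -> forall j, zfun z j != 0.
Proof.
move=> Hz j; rewrite /zfun mulf_neq0 //; apply/prodf_neq0 => k _.
exact: expfz_neq0.
Qed.

Lemma leval_tilde (q : laurent K n) z : (forall j, z j != 0) ->
  leval iota (tilde V q) z = leval iota q (zfun z).
Proof.
move=> Hz; rewrite /leval /tilde big_map; apply: eq_bigr => t _; congr (_ * _).
rewrite big_split_ord /=.
under [in RHS]eq_bigr do rewrite /zfun expfzMl.
rewrite big_split /=; congr (_ * _).
  by apply: eq_bigr => j _; rewrite /tilde_exp row_mxEl.
under eq_bigr => k _ do rewrite /tilde_exp row_mxEr mxE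
   (big_morph (fun e => z (rshift n k) ^ e) (fun a b => expfzDr a b (Hz _)) (expr0z _)).
rewrite exchange_big /=; apply: eq_bigr => j _.
rewrite (big_morph (fun x => x ^ (t.1 0 j)) (fun x y => expfzMl x y _) (exp1rz _ _)).
by apply: eq_bigr => k _; rewrite exprz_exp mxE mulrC.
Qed.
End EvalLemmas.
Section DimLemmas.
Variable R : realFieldType.

Definition dim_ge' N (S : 'rV[R]_N -> Prop) d : Prop :=
  exists p0 : 'rV[R]_N, exists D : 'M[R]_(d, N), \rank D = d /\
    forall x : 'rV[R]_d, (forall i, 0 <= x 0 i) -> \sum_i x 0 i <= 1 -> S (p0 + x *m D).

Lemma simplex_id N d (p : 'I_d.+1 -> 'rV[R]_N) (t : 'I_d.+1 -> R) :
  \sum_i t i = 1 ->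
  \sum_i t i *: p i = p ord0 + (\row_i t (lift ord0 i)) *m
                        (\matrix_i (p (lift ord0 i) - p ord0)).
Proof.
rewrite big_ord_recl => Ht; rewrite big_ord_recl mulmx_sum_row.
under [X in _ = _ + X]eq_bigr do rewrite rowK mxE scalerBr.
rewrite sumrB -scaler_suml.
have -> : t ord0 = 1 - \sum_(i < d) t (lift ord0 i) by rewrite -Ht addrK.
by rewrite scalerBl scale1r addrAC -addrA.
Qed.

Lemma row_freeP0 m N (D : 'M[R]_(m, N)) :
  (forall u : 'rV_m, u *m D = 0 -> u = 0) -> row_free D.
Proof.
move=> H; rewrite -kermx_eq0; apply/eqP/row_matrixP => i; rewrite row0.
by apply: H; rewrite -row_mul mulmx_ker row0.
Qed.

Lemma dim_geE N (S : 'rV[R]_N -> Prop) d : dim_ge S d <-> dim_ge' S d.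
Proof.
split.
  case=> p [Hr HS]; exists (p ord0), (\matrix_i (p (lift ord0 i) - p ord0)).
  split=> // x x0 x1.
  pose t i := if unlift ord0 i is Some j then x 0 j else 1 - \sum_j x 0 j.
  have tl : forall i : 'I_d, t (lift ord0 i) = x 0 i by move=> i; rewrite /t liftK.
  have t0 : t ord0 = 1 - \sum_j x 0 j by rewrite /t unlift_none.
  have st : \sum_i t i = 1.
    rewrite big_ord_recl t0.
    have -> : \sum_(i < d) t (lift ord0 i) = \sum_(i < d) x 0 i.
      by apply: eq_bigr => i _; exact: tl.
    by rewrite subrK.
  have tnn : forall i, 0 <= t i.
    move=> i; case: (unliftP ord0 i) => [j ->|->]; first by rewrite tl.
    by rewrite t0 subr_ge0.
  have Hrow : \row_i t (lift ord0 i) = x by apply/rowP => i; rewrite mxE tl.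
  by have := HS t tnn st; rewrite simplex_id // Hrow.
case=> p0 [D [Hr HS]].
pose p i := p0 + if unlift ord0 i is Some j then row j D else 0.
have pl : forall i : 'I_d, p (lift ord0 i) = p0 + row i D by move=> i; rewrite /p liftK.
have p0E : p ord0 = p0 by rewrite /p unlift_none addr0.
clearbody p.
exists p; split.
  suff -> : \matrix_i (p (lift ord0 i) - p ord0) = D by [].
  by apply/row_matrixP => i; rewrite rowK pl p0E addrC addKr.
move=> t t0 st; rewrite simplex_id //.
have -> : \matrix_i (p (lift ord0 i) - p ord0) = D.
  by apply/row_matrixP => i; rewrite rowK pl p0E addrC addKr.
rewrite p0E.
apply: HS => [i|]; first by rewrite mxE.
move: st; rewrite big_ord_recl => st.
under eq_bigr do rewrite mxE.
by rewrite -st lerDr.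
Qed.

Lemma dim_ge'_ext N (S1 S2 : 'rV[R]_N -> Prop) d :
  (forall w, S1 w -> S2 w) -> dim_ge' S1 d -> dim_ge' S2 d.
Proof. by move=> H [p0 [D [Hr HS]]]; exists p0, D; split=> // x x0 x1; apply/H/HS. Qed.

Definition sel m k (h : 'I_m -> 'I_k) : 'M[R]_(m, k) := \matrix_(i, j) ((h i == j)%:R).

Lemma sel_mul m k N (h : 'I_m -> 'I_k) (B : 'M[R]_(k, N)) : sel h *m B = rowsub h B.
Proof.
apply/matrixP => i j; rewrite !mxE (bigD1 (h i)) //= mxE eqxx mul1r big1 ?addr0 //.
by move=> k' /negbTE hk; rewrite mxE eq_sym hk mul0r.
Qed.

Lemma sel_row m k (h : 'I_m -> 'I_k) (hi : injective h) (u : 'rV[R]_m) i :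
  (u *m sel h) 0 (h i) = u 0 i.
Proof.
rewrite mxE (bigD1 i) //= mxE eqxx mulr1 big1 ?addr0 //.
by move=> j /negbTE ji; rewrite mxE (inj_eq hi) ji mulr0.
Qed.

Lemma sel_sum m k (h : 'I_m -> 'I_k) (hi : injective h) (u : 'rV[R]_m) :
  \sum_j (u *m sel h) 0 j = \sum_i u 0 i.
Proof.
under eq_bigr do rewrite mxE.
rewrite exchange_big /=; apply: eq_bigr => i _.
rewrite (bigD1 (h i)) //= mxE eqxx mulr1 big1 ?addr0 //.
by move=> j /negbTE ji; rewrite mxE eq_sym ji mulr0.
Qed.

Lemma sel_ge0 m k (h : 'I_m -> 'I_k) (u : 'rV[R]_m) :
  (forall i, 0 <= u 0 i) -> forall j, 0 <= (u *m sel h) 0 j.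
Proof.
move=> H j; rewrite mxE; apply: sumr_ge0 => i _; rewrite mxE.
by apply: mulr_ge0 => //; rewrite ler0n.
Qed.
End DimLemmas.
Section DimTransfer.
Variables (R : realFieldType) (n l : nat) (V : 'M[int]_(l, n)).
Local Notation VR := (VR R V).
Local Notation Pw := (Pw (R:=R) V).

Lemma dim_up (S : 'rV[R]_n -> Prop) d :
  dim_ge' S d -> dim_ge' (fun w => S (Pw w)) (d + l).
Proof.
case=> p0 [D [Hr HS]].
have DF : row_free D by rewrite /row_free Hr.
exists (row_mx p0 0), (col_mx (row_mx D 0) (row_mx (- VR) 1%:M)); split.
  apply/eqP; apply: row_freeP0 => u.
  rewrite -[u]hsubmxK mul_row_col !mul_mx_row !mulmx0 mulmx1 add_row_mx add0r.
  rewrite -row_mx0 => /eq_row_mx[H1 H2]; rewrite H2 mul0mx addr0 in H1.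
  rewrite H2.
  have -> : lsubmx u = 0 by apply: (row_free_inj DF); rewrite H1 mul0mx.
  by rewrite row_mx0.
move=> x x0 x1; rewrite /Pw /Pmat mulmxDl -mulmxA mul_col_mx !mul_row_col.
rewrite !mulmx1 !mul0mx !addr0 mul1mx addNr.
rewrite -[x]hsubmxK mul_row_col mulmx0 addr0.
apply: HS => [i|]; first by rewrite mxE.
apply: le_trans x1; rewrite [X in _ <= X]big_split_ord /=.
under eq_bigr do rewrite mxE.
by rewrite lerDl; apply: sumr_ge0 => i _.
Qed.
End DimTransfer.
Section DimTransfer2.
Variables (R : realFieldType) (n l : nat) (V : 'M[int]_(l, n)).
Local Notation PM := (@Pmat R n l V).
Local Notation Pw := (Pw (R:=R) V).

Lemma rank_Pmat : (n <= \rank PM)%N.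
Proof.
have H : row_mx 1%:M 0 *m PM = 1%:M.
  by rewrite /Pmat mul_row_col mul1mx mul0mx addr0.
by rewrite -{1}(mxrank1 R n) -H mxrankM_maxr.
Qed.

Lemma dim_down (S : 'rV[R]_n -> Prop) e :
  dim_ge' (fun w => S (Pw w)) e -> dim_ge' S (e - l).
Proof.
case=> p0 [D [Hr HS]].
have rE : (e - l <= \rank (D *m PM))%N.
  have := mxrank_mul_min D PM; rewrite Hr; have := rank_Pmat.
  move: (\rank PM) (\rank (D *m PM)) => r s; lia.
pose f := maxrankfun (D *m PM).
pose g (i : 'I_(e - l)) : 'I_e := f (widen_ord rE i).
have wi : injective (widen_ord rE).
  by move=> i j /(congr1 val) /= /val_inj.
exists (p0 *m PM), (rowsub g (D *m PM)); split.
  apply/eqP; apply: row_freeP0 => u Hu.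
  have : (u *m sel R (widen_ord rE)) *m rowsub f (D *m PM) = 0 *m rowsub f (D *m PM).
    rewrite mul0mx -Hu -mulmxA sel_mul; congr (_ *m _).
    by apply/matrixP => i j; rewrite !mxE.
  move/(row_free_inj (maxrowsub_free (D *m PM))) => H.
  by apply/rowP => i; rewrite -(sel_row wi u i) H !mxE.
move=> x x0 x1.
have := HS (x *m sel R g) (@sel_ge0 R _ _ g x x0).
rewrite /Pw mulmxDl -!mulmxA sel_mul; apply.
have gi : injective g by move=> i j /maxrankfun_inj /wi.
by rewrite sel_sum.
Qed.

Lemma has_dim_pre (S : 'rV[R]_n -> Prop) (T : 'rV[R]_(n + l) -> Prop) d :
  (forall w, T w <-> S (Pw w)) -> has_dim S d -> has_dim T (d + l).
Proof.
move=> ST [Hd Hle]; split.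
  apply/dim_geE; apply: (dim_ge'_ext (S1 := fun w => S (Pw w))).
    by move=> w /ST.
  by apply: dim_up; apply/dim_geE.
move=> e He.
have : dim_ge' (fun w => S (Pw w)) e.
  by apply: (dim_ge'_ext (S1 := T)) => [w /ST|]; last apply/dim_geE.
move/dim_down/dim_geE/Hle; lia.
Qed.
End DimTransfer2.
Section Slice.
Variables (K : fieldType) (n l : nat) (V : 'M[int]_(l, n)).
Local Notation F := (tilde_exp V).

Definition Psi (c : 'rV[int]_(n + l)) : 'rV[int]_l := rsubmx c - lsubmx c *m V^T.
Definition unPsi (b : 'rV[int]_l) (a : 'rV[int]_n) : 'rV[int]_(n + l) :=
  row_mx a (b + a *m V^T).
Definition slice b (q : laurent K (n + l)) : laurent K n :=
  [seq (lsubmx t.1, t.2) | t <- q & Psi t.1 == b].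

Lemma Psi_unPsi b a : Psi (unPsi b a) = b.
Proof. by rewrite /Psi /unPsi row_mxKr row_mxKl addrK. Qed.

Lemma lsub_unPsi b a : lsubmx (unPsi b a) = a.
Proof. by rewrite /unPsi row_mxKl. Qed.

Lemma unPsiE b a c : (Psi c == b) && (lsubmx c == a) = (c == unPsi b a).
Proof.
apply/andP/eqP => [[/eqP <- /eqP <-]|->]; last by rewrite Psi_unPsi lsub_unPsi !eqxx.
by rewrite /unPsi /Psi subrK hsubmxK.
Qed.

Lemma Psi_add_tilde c a : Psi (c + F a) = Psi c.
Proof.
rewrite /Psi /tilde_exp -[c]hsubmxK add_row_mx !row_mxKl !row_mxKr.
by rewrite mulmxDl opprD addrACA addrN addr0.
Qed.

Lemma lsub_add_tilde c a : lsubmx (c + F a) = lsubmx c + a.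
Proof. by rewrite /tilde_exp -[c]hsubmxK add_row_mx !row_mxKl. Qed.

Lemma slice_cat b p q : slice b (ladd p q) = ladd (slice b p) (slice b q).
Proof. by rewrite /slice /ladd filter_cat map_cat. Qed.

Lemma slice_big b k (G : 'I_k -> laurent K (n + l)) :
  slice b (\big[@ladd K (n + l)/[::]]_(i < k) G i) = \big[@ladd K n/[::]]_(i < k) slice b (G i).
Proof. exact: (big_morph (slice b) (slice_cat b) (erefl _)). Qed.

Lemma slice_cons b s h :
  slice b (s :: h) = if Psi s.1 == b then (lsubmx s.1, s.2) :: slice b h else slice b h.
Proof. by rewrite /slice /=; case: ifP. Qed.

Lemma slice_head b s (p : laurent K n) :
  slice b [seq (s.1 + t.1, s.2 * t.2) | t <- tilde V p] =
  if Psi s.1 == b then [seq (lsubmx s.1 + t.1, s.2 * t.2) | t <- p] else [::].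
Proof.
rewrite /slice /tilde -map_comp filter_map.
rewrite (eq_filter (a2 := fun _ => Psi s.1 == b)); last first.
  by move=> t /=; rewrite Psi_add_tilde.
case: ifP => _; last by rewrite filter_pred0.
rewrite filter_predT -map_comp; apply: eq_map => t /=.
by rewrite lsub_add_tilde.
Qed.

Lemma slice_lmul b h (p : laurent K n) :
  slice b (lmul h (tilde V p)) = lmul (slice b h) p.
Proof.
elim: h => [|s h IH] //.
rewrite slice_cons /lmul allpairs_cons -/(lmul h (tilde V p)).
rewrite -/(ladd _ _) slice_cat IH slice_head.
by case: ifP.
Qed.

Lemma lcoef_slice b q a : lcoef (slice b q) a = lcoef q (unPsi b a).
Proof.
rewrite /lcoef /slice big_map big_filter_cond; apply: eq_bigl => t /=.
by rewrite unPsiE.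
Qed.
End Slice.
Section Complete.
Variables (R : realFieldType) (K : fieldType) (val : K -> R).
Variables (n l : nat) (V : 'M[int]_(l, n)).
Local Notation Pw := (Pw (R:=R) V).

Lemma exists_min (T : eqType) (s : seq T) (G : T -> R) x : x \in s ->
  exists2 y, y \in s & forall z, z \in s -> G y <= G z.
Proof.
elim: s x => // a s IH x _.
case: s IH => [|b s] IH.
  by exists a; rewrite ?inE // => z; rewrite inE => /eqP->.
have [y yin ymin] := IH b (mem_head b s).
case: (lerP (G a) (G y)) => H.
  exists a; first exact: mem_head.
  move=> z; rewrite inE => /orP[/eqP->//|/ymin]; exact: le_trans.
exists y; first by rewrite inE yin orbT.
move=> z; rewrite inE => /orP[/eqP->|/ymin//]; exact: ltW.
Qed.

Lemma mem_argmin N (p : laurent K N) w a :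
  (a \in argmin val p w) =
  (a \in lsupp p) && all (fun b => tropterm val p w a <= tropterm val p w b) (lsupp p).
Proof. by rewrite /argmin mem_filter andbC. Qed.

Lemma argmin_uniq N (p : laurent K N) w : uniq (argmin val p w).
Proof. exact/filter_uniq/lsupp_uniq. Qed.

Lemma pairing_unPsi b a (w : 'rV[R]_(n + l)) :
  pairing (unPsi V b a) w = pairing a (Pw w) + pairing b (rsubmx w).
Proof.
rewrite -[w]hsubmxK /unPsi pairing_row pairingDl pairing_mulV Pw_row pairingDr.
by rewrite row_mxKr [pairing b _ + _]addrC addrA.
Qed.

Lemma tropterm_unPsi g b a (w : 'rV[R]_(n + l)) :
  tropterm val g w (unPsi V b a) =
  tropterm val (slice V b g) (Pw w) a + pairing b (rsubmx w).
Proof. by rewrite /tropterm lcoef_slice pairing_unPsi addrA. Qed.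

Lemma two_size (T : eqType) (s : seq T) x y :
  uniq s -> x \in s -> y \in s -> x != y -> (1 < size s)%N.
Proof.
move=> us xs ys xy.
have := @uniq_leq_size _ [:: x; y] s; rewrite /= inE xy /= => H.
by apply: H => // z; rewrite !inE => /orP[]/eqP->.
Qed.

Lemma ideal_tilde k (f : 'I_k -> laurent K n) (w : 'rV[R]_(n + l)) :
  (forall u, Y val f u -> in_trop_ideal val f u) ->
  Y val (fun i => tilde V (f i)) w -> in_trop_ideal val (fun i => tilde V (f i)) w.
Proof.
move=> Hc HY g [h Hh].
have Hu : in_trop_ideal val f (Pw w).
  by apply: Hc => j _; apply/in_trop_tilde; apply: HY.
rewrite /in_trop; case E: (lsupp g) => [|c s]; first by left.
right.
have cin : c \in lsupp g by rewrite E mem_head.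
have [c0 c0in c0min] := exists_min (tropterm val g w) cin.
set b := Psi V c0; set q := slice V b g.
have qI : in_ideal f q.
  exists (fun i => slice V b (h i)) => a.
  rewrite /q lcoef_slice Hh -lcoef_slice slice_big; congr lcoef.
  by apply: eq_bigr => i _; exact: slice_lmul.
have c0E : unPsi V b (lsubmx c0) = c0 by apply/esym/eqP; rewrite -unPsiE !eqxx.
have a0in : lsubmx c0 \in lsupp q by rewrite mem_lsupp /q lcoef_slice c0E -mem_lsupp.
case: (Hu q qI) => [Hq|]; first by rewrite Hq in a0in.
have key : forall a, a \in argmin val q (Pw w) -> unPsi V b a \in argmin val g w.
  move=> a; rewrite !mem_argmin => /andP[ain /allP amin].
  rewrite mem_lsupp -lcoef_slice -/q -mem_lsupp ain /=.
  apply/allP => z zin; apply: le_trans (c0min _ zin).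
  by rewrite -c0E !tropterm_unPsi lerD2r amin.
have := argmin_uniq q (Pw w).
case Ha: (argmin val q (Pw w)) => [|a1 [|a2 s']] //= /andP[+ _] _.
rewrite inE negb_or => /andP[a12 _].
apply: (@two_size _ _ (unPsi V b a1) (unPsi V b a2)).
- exact: argmin_uniq.
- by apply: key; rewrite Ha mem_head.
- by apply: key; rewrite Ha !inE eqxx orbT.
- by apply: contra a12 => /eqP/(congr1 lsubmx); rewrite !lsub_unPsi => ->.
Qed.
End Complete.
Unset Implicit Arguments.
Set Strict Implicit.
Theorem lemma3p3 (R : realFieldType) (K : fieldType) (val : K -> R)
  (Hval : is_valuation val) (n m : nat)
  (A : 'M[rat]_(m.+1, n)) (HA : \rank A = m.+1)
  (V : 'M[int]_(n - m.+1, n))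
  (HV : (map_mx (fun x : int => x%:~R : rat) V :=: kermx A^T)%MS)
  (f : 'I_(n - m) -> laurent K n) (Hf : forall i, is_poly (f i)) :
  let ft := fun i => tilde V (f i) in
  (proper_inter val f -> proper_inter val ft) /\
  (transversal_inter val f -> transversal_inter val ft) /\
  (forall (L : closedFieldType) (iota : {rmorphism K -> L}),
      newton_nondeg R f iota -> newton_nondeg R ft iota) /\
  (complete_inter val f -> complete_inter val ft).
Proof.
move=> ft.
have Yft : forall J w, Yint val ft J w <-> Yint val f J (Pw (R:=R) V w).
  move=> J w; split => H j jJ; first by apply/in_trop_tilde; exact: H.
  by apply/in_trop_tilde; exact: H.
have Hprop : forall J, proper_int val f J -> proper_int val ft J.
  rewrite /proper_int => J H.
  have HJ : (#|J| <= n)%N by apply: leq_trans (max_card J) _; rewrite card_ord leq_subr.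
  have -> : (n + (n - m.+1) - #|J| = n - #|J| + (n - m.+1))%N by lia.
  exact: (has_dim_pre (Yft J) H).
split; first exact: Hprop.
split.
  move=> HT J HJ; have [HP Ht] := HT J HJ; split; first exact: Hprop.
  move=> w /Yft /Ht; rewrite /transversal_at.
  have -> : [seq argmin val (ft j) w | j <- enum J] =
            map (map (tilde_exp V)) [seq argmin val (f j) (Pw (R:=R) V w) | j <- enum J].
    by rewrite -map_comp; apply: eq_map => j; rewrite /= argmin_tilde.
  rewrite msum_tilde affdim_tilde => ->; apply: eq_bigr => j _.
  by rewrite argmin_tilde affdim_tilde.
split.
  move=> L iota HN w Haff [z [zn Hz]]; apply: (HN (Pw (R:=R) V w)).
    have E2 : [seq face (ft i) w | i <- enum 'I_(n - m)] =
              map (map (tilde_exp V)) [seq face (f i) (Pw (R:=R) V w) | i <- enum 'I_(n - m)].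
      by rewrite -map_comp; apply: eq_map => j; rewrite /= face_tilde.
    by rewrite E2 msum_tilde affdim_tilde in Haff.
  exists (zfun V z); split; first exact: zfun_neq0.
  move=> i; have := Hz i; rewrite /ft face_tilde lrestrict_tilde leval_tilde //.
move=> [HP HC]; split; first exact: Hprop.
move=> w; split.
  move=> Hi j _; apply: Hi.
  exists (fun i => if i == j then [:: (0, 1)] else [::]) => a.
  rewrite lcoef_big (bigD1 j) //= eqxx lmul_one big1 ?addr0 // => i /negbTE ->.
  by rewrite lmul_nil lcoef_nil.
apply: (ideal_tilde (V := V)) => u Hu.
by apply/HC.
Qed.
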